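(* (i) The ring homomorphism $$\phi:K\langle\mathbf x,\mathbf y\rangle^\dagger\to L^{\dagger\prime},\qquad\sum_{\mathbf v\in\mathbb Z^N_{\ge0}}f_{\mathbf v}(\mathbf x)\mathbf y^{\mathbf v}\mapsto\sum_{\mathbf v\in\mathbb Z^N_{\ge0}}f_{\mathbf v}(\mathbf x)\mathbf t^{v_1\mathbf w_1+\cdots+v_N\mathbf w_N}$$ is surjective. (ii) The homomorphism of left $\mathcal D^\dagger$-modules $$\varphi:\mathcal D^\dagger\to L^{\dagger\prime},\qquad\sum_{\mathbf v}f_{\mathbf v}(\mathbf x)\frac{\partial^{\mathbf v}}{\pi^{|\mathbf v|}}\mapsto\Big(\sum_{\mathbf v}f_{\mathbf v}(\mathbf x)\frac{\partial^{\mathbf v}}{\pi^{|\mathbf v|}}\Big)\cdot1=\sum_{\mathbf v}f_{\mathbf v}(\mathbf x)\mathbf t^{v_1\mathbf w_1+\cdots+v_N\mathbf w_N}$$ is surjective.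
   Context: Let $\mathbf w_1,\dots,\mathbf w_N\in\mathbb Z^n$ be the columns of an $n\times N$ integer matrix of rank $n$. $p$ a prime, $K$ a finite extension of $\mathbb Q_p$ containing $\pi$ with $\pi^{p-1}+p=0$, $|a|=p^{-\mathrm{ord}_p(a)}$. Multi-index notation $\mathbf x^{\mathbf v}$, $\mathbf y^{\mathbf v}$, $\mathbf t^{\mathbf w}$, $|\mathbf v|=\sum v_j$, $\partial^{\mathbf v}=\prod(\partial/\partial x_j)^{v_j}$. For $r>0$, $K\{r^{-1}\mathbf x\}$ = power series $\sum a_{\mathbf v}\mathbf x^{\mathbf v}$ with $|a_{\mathbf v}|r^{|\mathbf v|}$ bounded, norm $\|\cdot\|_r=\sup|a_{\mathbf v}|r^{|\mathbf v|}$. $K\langle\mathbf x,\mathbf y\rangle^\dagger=\bigcup_{r>1,s>1}\{\sum_{\mathbf v}f_{\mathbf v}(\mathbf x)\mathbf y^{\mathbf v}:f_{\mathbf v}\in K\{r^{-1}\mathbf x\},\ \|f_{\mathbf v}\|_rs^{|\mathbf v|}\text{ bounded}\}$. $\Delta$ = convex hull of $\{0,\mathbf w_j\}$, $\delta$ = cone generated by the $\mathbf w_j$, $d(\mathbf w)=\inf\{a>0:\mathbf w\in a\Delta\}$, $C(A)=\{\sum k_j\mathbf w_j:k_j\in\mathbb Z_{\ge0}\}$, $L^{\dagger\prime}=\bigcup_{r>1,s>1}\{\sum_{\mathbf w\in C(A)}a_{\mathbf w}(\mathbf x)\mathbf t^{\mathbf w}:a_{\mathbf w}\in K\{r^{-1}\mathbf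 x\},\ \|a_{\mathbf w}\|_rs^{d(\mathbf w)}\text{ bounded}\}$. $\mathcal D^\dagger=\bigcup_{r>1,s>1}\{\sum_{\mathbf v}f_{\mathbf v}(\mathbf x)\partial^{\mathbf v}/\pi^{|\mathbf v|}:f_{\mathbf v}\in K\{r^{-1}\mathbf x\},\ \|f_{\mathbf v}\|_rs^{|\mathbf v|}\text{ bounded}\}$; $L^{\dagger\prime}$ is a left $\mathcal D^\dagger$-module with $\partial/\partial x_j$ acting by $\partial/\partial x_j+\pi\mathbf t^{\mathbf w_j}$. *)

(* Defs.v *)
From HB Require Import structures.
From mathcomp Require Import all_boot all_order all_algebra.
From mathcomp Require Import classical_sets reals exp.
Set Implicit Arguments. Unset Strict Implicit. Unset Printing Implicit Defensive.
Import Order.TTheory GRing.Theory Num.Theory.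
Local Open Scope ring_scope.
Local Open Scope classical_set_scope.

Section Defs.
Variables (R : realType) (K : fieldType) (nrm : K -> R).

(* Realized as: a field K with a non-archimedean absolute value nrm extending the
   normalized p-adic absolute value (|p| = 1/p), complete, discretely valued, with
   finite residue field.  (These are exactly the finite extensions of Q_p with the
   unique extension of the p-adic absolute value.) *)
Definition nrm_abs_value :=
  [/\ forall x : K, 0 <= nrm x,
      forall x : K, nrm x = 0 <-> x = 0,
      forall x y : K, nrm (x * y) = nrm x * nrm y &
      forall x y : K, nrm (x + y) <= Num.max (nrm x) (nrm y)].

Definition nrm_cauchy (u : nat -> K) :=
  forall e : R, 0 < e -> exists M : nat,
    forall m k : nat, (M <= m)%N -> (M <= k)%N -> nrm (u m - u k) < e.

Definition nrm_converges (u : nat -> K) (l : K) :=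
  forall e : R, 0 < e -> exists M : nat, forall m : nat, (M <= m)%N -> nrm (u m - l) < e.

Definition nrm_complete :=
  forall u : nat -> K, nrm_cauchy u -> exists l : K, nrm_converges u l.

Definition nrm_discrete :=
  exists varpi : K, 0 < nrm varpi < 1 /\
    forall x : K, x != 0 -> exists z : int, nrm x = nrm varpi ^ z.

Definition nrm_finite_residue_field :=
  exists S : seq K, all (fun s => nrm s <= 1) S /\
    forall x : K, nrm x <= 1 -> exists2 s, s \in S & nrm (x - s) < 1.

Definition is_finite_ext_Qp (p : nat) :=
  [/\ nrm_abs_value, nrm p%:R = (p%:R)^-1, nrm_complete,
      nrm_discrete & nrm_finite_residue_field].

Definition has_sum (I : eqType) (P : I -> Prop) (f : I -> K) (l : K) :=
  forall e : R, 0 < e -> exists S : seq I, (forall i, i \in S -> P i) /\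
    forall T : seq I, uniq T -> (forall i, i \in T -> P i) -> {subset S <= T} ->
      nrm (\sum_(i <- T) f i - l) < e.

End Defs.

Definition mono (m : nat) := {ffun 'I_m -> nat}.
Definition mdeg (m : nat) (v : mono m) : nat := (\sum_(i < m) v i)%N.

(* v_1 w_1 + ... + v_N w_N, where w_j is the j-th column of A *)
Definition expo (n N : nat) (A : 'M[int]_(n, N)) (v : mono N) : 'cV[int]_n :=
  \col_i \sum_(j < N) ((v j)%:Z * A i j).

Definition in_CA (n N : nat) (A : 'M[int]_(n, N)) (w : 'cV[int]_n) :=
  exists v : mono N, expo A v = w.

(* w in a*Delta, Delta = convex hull of {0, w_1, ..., w_N} in R^n *)
Definition in_scaled_Delta (R : realType) (n N : nat) (A : 'M[int]_(n, N))
    (a : R) (w : 'cV[int]_n) :=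
  exists lam : 'I_N -> R, (forall j, 0 <= lam j) /\ \sum_j lam j <= a /\
    forall i, (w i ord0)%:~R = \sum_j lam j * (A i j)%:~R.

Definition dA (R : realType) (n N : nat) (A : 'M[int]_(n, N)) (w : 'cV[int]_n) : R :=
  inf [set a : R | 0 < a /\ in_scaled_Delta A a w].

Section Spaces.
Variables (R : realType) (K : fieldType) (nrm : K -> R) (n N : nat) (A : 'M[int]_(n, N)).

(* An element sum_v f_v(x) y^v of K<x,y>^dagger is given by F with
   F u v = coefficient of x^u in f_v(x).  The condition
   "f_v in K{r^{-1}x}, ||f_v||_r s^{|v|} bounded" is written out. *)
Definition in_Kxy_dagger (F : mono N -> mono N -> K) :=
  exists r s C : R, 1 < r /\ 1 < s /\
    forall u v, nrm (F u v) * r ^+ mdeg u * s ^+ mdeg v <= C.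

(* An element sum_v f_v(x) d^v / pi^{|v|} of D^dagger is given by P with
   P u v = coefficient of x^u in f_v(x). *)
Definition in_D_dagger (P : mono N -> mono N -> K) :=
  exists r s C : R, 1 < r /\ 1 < s /\
    forall u v, nrm (P u v) * r ^+ mdeg u * s ^+ mdeg v <= C.

(* An element sum_{w in C(A)} a_w(x) t^w of L^{dagger'} is given by G with
   G u w = coefficient of x^u in a_w(x) (values for w outside C(A) are irrelevant). *)
Definition in_L_dagger (G : mono N -> 'cV[int]_n -> K) :=
  exists r s C : R, 1 < r /\ 1 < s /\
    forall u w, in_CA A w -> nrm (G u w) * r ^+ mdeg u * s `^ (dA R A w) <= C.

Definition phi_maps_to (F : mono N -> mono N -> K) (G : mono N -> 'cV[int]_n -> K) :=
  forall u w, in_CA A w -> has_sum nrm (fun v : mono N => expo A v = w) (fun v => F u v) (G u w).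

(* varphi(P) = P . 1 = sum_v f_v(x) t^{v_1 w_1 + ... + v_N w_N} *)
Definition varphi_maps_to (P : mono N -> mono N -> K) (G : mono N -> 'cV[int]_n -> K) :=
  forall u w, in_CA A w -> has_sum nrm (fun v : mono N => expo A v = w) (fun v => P u v) (G u w).

End Spaces.

(* Main.v *)
Require Import Defs.
From HB Require Import structures.
From mathcomp Require Import all_boot all_order all_algebra.
From mathcomp Require Import classical_sets reals exp.
From mathcomp Require Import boolp zify.
Import Order.TTheory GRing.Theory Num.Theory.
Local Open Scope ring_scope.

Module Helpers.
Set Implicit Arguments. Unset Strict Implicit. Unset Printing Implicit Defensive.
Lemma fin_bound (T : finType) (Q : T -> nat -> Prop) :
  (forall t, exists c, Q t c) -> (forall t c c', (c <= c')%N -> Q t c -> Q t c') ->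
  exists c, forall t, Q t c.
Proof.
move=> H Hm; pose f t := projT1 (cid (H t)).
exists (\max_t f t) => t; apply: (Hm t (f t)); first exact: leq_bigmax.
exact: (projT2 (cid (H t))).
Qed.

Section Dickson.
Variable N : nat.
Definition lemm (k k' : mono N) := forall i, (k i <= k' i)%N.
Definition upcl (U : mono N -> Prop) := forall k k' : mono N, U k -> lemm k k' -> U k'.
Definition depon (S : {set 'I_N}) (U : mono N -> Prop) :=
  forall k k' : mono N, (forall i, i \in S -> k i = k' i) -> U k -> U k'.
Definition dclaim (U : mono N -> Prop) :=
  exists c, forall k : mono N, U k -> exists m : mono N, U m /\ lemm m k /\ forall i, (m i <= c)%N.
Definition setm (k : mono N) (i : 'I_N) (t : nat) : mono N :=
  [ffun j => if j == i then t else k j].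

Lemma dickson_step (S : {set 'I_N}) :
  (forall S' : {set 'I_N}, (#|S'| < #|S|)%N -> forall U, upcl U -> depon S' U -> dclaim U) ->
  forall U, upcl U -> depon S U -> dclaim U.
Proof.
move=> IH U Uup Udep.
case: (pselect (exists k, U k)) => [[u0 Uu0]|nU]; last first.
  by exists 0%N => k Uk; exfalso; apply: nU; exists k.
pose u1 : mono N := [ffun i => if i \in S then u0 i else 0%N].
have Uu1 : U u1 by apply: Udep Uu0 => i iS; rewrite ffunE iS.
pose Mx := (\max_i u1 i)%N.
pose Q := fun (it : ('I_N * 'I_Mx.+1)%type) c => it.1 \in S -> forall k, U (setm k it.1 it.2) ->
     exists m, U (setm m it.1 it.2) /\ lemm m k /\ forall j, (m j <= c)%N.
have [C HC] : exists C, forall it, Q it C; last first.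
- exists (maxn C Mx) => k Uk.
  case: (pselect (exists i, (k i < u1 i)%N)) => [[i Hi]|H]; last first.
    exists u1; split => //; split.
      move=> i; rewrite leqNgt; apply/negP => Hi; apply: H; exists i.
      exact: Hi.
    by move=> i; rewrite leq_max; apply/orP; right; apply: leq_bigmax.
  have iS : i \in S by move: Hi; rewrite ffunE; case: (i \in S).
  have ltM : (k i < Mx.+1)%N.
    apply: leq_trans Hi _; rewrite ltnW // ltnS; exact: leq_bigmax.
  have Uk' : U (setm k i (Ordinal ltM)).
    apply: Uup Uk _ => j; rewrite ffunE; by case: eqP => [->|].
  have [m [Um [lmk bm]]] := HC (i, Ordinal ltM) iS k Uk'.
  exists (setm m i (k i)); split => //; split.
    by move=> j; rewrite ffunE; case: eqP => [->|].
  move=> j; rewrite ffunE; case: eqP => _.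
    by rewrite leq_max; apply/orP; right; rewrite -ltnS.
  by rewrite leq_max bm.
apply: fin_bound.
- case=> i t; case: (boolP (i \in S)) => iS; last by exists 0%N; rewrite /Q /= (negbTE iS).
  have H1 : (#|S :\ i| < #|S|)%N by rewrite [X in (_ < X)%N](cardsD1 i) iS.
  have H2 : upcl (fun k => U (setm k i t)).
    move=> k k' Uk lkk'; apply: Uup Uk _ => j; rewrite !ffunE.
    by case: eqP.
  have H3 : depon (S :\ i) (fun k => U (setm k i t)).
    move=> k k' Hkk' Uk; apply: Udep Uk => j jS; rewrite !ffunE.
    case: eqP => // /eqP ji; apply: Hkk'; by rewrite in_setD1 ji.
  have [c Hc] := IH (S :\ i) H1 _ H2 H3.
  by exists c => _ k Uk; apply: Hc.
- move=> [i t] c c' cc' HQ iS k Uk; have [m [? [? bm]]] := HQ iS k Uk.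
  exists m; split => //; split => // j; exact: leq_trans (bm j) cc'.
Qed.

Lemma dickson U : upcl U -> dclaim U.
Proof.
suff H : forall s (S : {set 'I_N}), (#|S| < s)%N -> forall U, upcl U -> depon S U -> dclaim U.
  move=> Uup; apply: (H #|[set: 'I_N]|.+1 [set: 'I_N]) => // k k' Hk Uk.
  suff -> : k' = k by [].
  by apply/ffunP => i; rewrite Hk // in_setT.
elim=> [//|s IHs] S HS; apply: dickson_step => S' HS'; apply: IHs.
exact: leq_trans HS' HS.
Qed.
End Dickson.
Section Geo.
Variables (n N : nat) (A : 'M[int]_(n, N)).

Definition addm (v1 v2 : mono N) : mono N := [ffun j => (v1 j + v2 j)%N].
Definition subm (v1 v2 : mono N) : mono N := [ffun j => (v1 j - v2 j)%N].

Lemma expoD v1 v2 : expo A (addm v1 v2) = expo A v1 + expo A v2.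
Proof.
apply/matrixP => i j; rewrite !mxE -big_split; apply: eq_bigr => l _.
by rewrite ffunE PoszD mulrDl.
Qed.

Lemma mdegD v1 v2 : mdeg (addm v1 v2) = (mdeg v1 + mdeg v2)%N.
Proof. by rewrite /mdeg -big_split; apply: eq_bigr => l _; rewrite ffunE. Qed.

Lemma addm_sub (m k : mono N) : lemm m k -> addm m (subm k m) = k.
Proof. by move=> H; apply/ffunP => j; rewrite !ffunE subnKC. Qed.

Lemma mdeg_sub (m k : mono N) : (mdeg (subm k m) <= mdeg k)%N.
Proof. by apply: leq_sum => j _; rewrite ffunE leq_subr. Qed.

Lemma per_rho (rho : 'cV[int]_n) : exists c, forall k : mono N,
  in_CA A (rho + expo A k) ->
  exists v, expo A v = rho + expo A k /\ (mdeg v <= c + mdeg k)%N.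
Proof.
pose U := fun k => in_CA A (rho + expo A k).
have Uup : upcl U.
  move=> k k' [v Hv] lkk'; exists (addm v (subm k' k)).
  by rewrite expoD Hv -addrA -expoD addm_sub.
have [cD HD] := dickson Uup.
pose mof (t : {ffun 'I_N -> 'I_cD.+1}) : mono N := [ffun j => nat_of_ord (t j)].
pose Q := fun t c => U (mof t) -> exists v, expo A v = rho + expo A (mof t) /\ (mdeg v <= c)%N.
have [C HC] : exists C, forall t, Q t C.
  apply: fin_bound.
    move=> t; case: (pselect (U (mof t))) => [[v Hv]|nU].
      by exists (mdeg v) => _; exists v.
    by exists 0%N.
  move=> t c c' cc' HQ Ut; have [v [Hv Hd]] := HQ Ut.
  by exists v; split => //; apply: leq_trans Hd cc'.
exists C => k Uk.
have [m [Um [lmk bm]]] := HD k Uk.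
pose t : {ffun 'I_N -> 'I_cD.+1} := [ffun j => inord (m j)].
have mt : mof t = m by apply/ffunP => j; rewrite !ffunE inordK // ltnS.
have [v1 [Hv1 Hd1]] := HC t (eq_ind_r U Um mt).
exists (addm v1 (subm k m)); split.
  by rewrite expoD Hv1 mt -addrA -expoD addm_sub.
by rewrite mdegD leq_add // mdeg_sub.
Qed.

Lemma unif_rho (M : nat) : exists c, forall rho : 'cV[int]_n,
  (forall i, `|rho i ord0| <= M%:Z) -> forall k : mono N,
  in_CA A (rho + expo A k) ->
  exists v, expo A v = rho + expo A k /\ (mdeg v <= c + mdeg k)%N.
Proof.
pose rof (t : {ffun 'I_n -> 'I_(M.*2.+1)}) : 'cV[int]_n :=
  \col_i ((nat_of_ord (t i))%:Z - M%:Z).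
pose Q := fun t c => forall k : mono N, in_CA A (rof t + expo A k) ->
  exists v, expo A v = rof t + expo A k /\ (mdeg v <= c + mdeg k)%N.
have [C HC] : exists C, forall t, Q t C.
  apply: fin_bound; first by move=> t; exact: per_rho.
  move=> t c c' cc' HQ k Uk; have [v [Hv Hd]] := HQ k Uk.
  by exists v; split => //; apply: leq_trans Hd _; rewrite leq_add2r.
exists C => rho Hrho.
pose t : {ffun 'I_n -> 'I_(M.*2.+1)} := [ffun i => inord (absz (rho i ord0 + M%:Z))].
suff -> : rho = rof t by apply: HC.
apply/matrixP => i j; rewrite (ord1 j) !mxE ffunE.
have := Hrho i; move: (rho i ord0) => x Hx.
have Hx' : 0 <= x + M%:Z by move: Hx; rewrite ler_norml; lia.
rewrite inordK.
  by rewrite gez0_abs // addrK.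
rewrite ltnS -(ler_nat int) -muln2 natrM.
rewrite -[X in X <= _]gez0_abs //.
move: Hx; rewrite ler_norml; lia.
Qed.
End Geo.
Section Real.
Variables (R : realType) (n N : nat) (A : 'M[int]_(n, N)).
Local Open Scope classical_set_scope.

Lemma geo : exists c : nat, forall w, in_CA A w ->
  exists v, expo A v = w /\ (mdeg v)%:R <= c%:R + 1 + dA R A w :> R.
Proof.
pose M := (\max_i \sum_j absz (A i j))%N.
have [c Hc] := unif_rho A M.
exists c => w [v0 Hv0].
pose E := [set a : R | 0 < a /\ in_scaled_Delta A a w].
have E0 : E ((mdeg v0)%:R + 1).
  split; first by rewrite ltr_wpDl.
  exists (fun j => (v0 j)%:R); split; first by move=> j; rewrite ler0n.
  split; first by rewrite /mdeg natr_sum lerDl ler01.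
  move=> i; rewrite -Hv0 mxE rmorph_sum /=; apply: eq_bigr => j _.
  by rewrite intrM.
have hinf : has_inf E.
  by split; [exists ((mdeg v0)%:R + 1) | exists 0 => a [] /ltW].
have [a [a0 [lam [lam0 [lamS lamw]]]] ha] := inf_adherent ltr01 hinf.
pose k : mono N := [ffun j => Num.truncn (lam j)].
pose rho := w - expo A k.
have Hrho : forall i, `|rho i ord0| <= M%:Z.
  move=> i.
  have e1 : (rho i ord0)%:~R = \sum_j (lam j - (k j)%:R) * (A i j)%:~R :> R.
    rewrite /rho !mxE intrB lamw rmorph_sum /= -sumrB; apply: eq_bigr => j _.
    by rewrite intrM mulrBl.
  have e2 : `|(rho i ord0)%:~R| <= ((\sum_j absz (A i j))%N)%:R :> R.
    rewrite e1 natr_sum; apply: le_trans (ler_norm_sum _ _ _) _.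
    apply: ler_sum => j _; rewrite normrM.
    have [t1 t2] : 0 <= lam j - (k j)%:R /\ lam j - (k j)%:R < 1.
      rewrite ffunE; case/andP: (truncn_itv (lam0 j)) => h1 h2.
      by split; [rewrite subr_ge0 | rewrite ltrBlDl natr1].
    rewrite -[X in _ <= X]mul1r; apply: ler_pM => //.
      by rewrite (ger0_norm t1) ltW.
    by rewrite -intr_norm -abszE.
  have e3 : ((\sum_j absz (A i j))%N <= M)%N by apply: leq_bigmax.
  rewrite -(ler_int R) intr_norm; apply: le_trans e2 _.
  by rewrite ler_nat.
have [v [Hv Hd]] := Hc rho Hrho k (ltac:(by rewrite /rho subrK; exists v0)).
exists v; split; first by rewrite Hv /rho subrK.
have Hk : (mdeg k)%:R <= a.
  rewrite /mdeg natr_sum; apply: le_trans lamS; apply: ler_sum => j _.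
  by rewrite ffunE; case/andP: (truncn_itv (lam0 j)).
apply: (@le_trans _ _ (c%:R + a)).
  apply: (@le_trans _ _ (c + mdeg k)%N%:R); first by rewrite ler_nat.
  by rewrite natrD lerD2l.
rewrite -addrA lerD2l addrC; exact: ltW.
Qed.
End Real.
End Helpers.
Import Helpers.

Theorem mainTheorem9 (R : realType) (p : nat) (K : fieldType) (nrm : K -> R)
    (pi : K) (n N : nat) (A : 'M[int]_(n, N)) :
  prime p ->
  is_finite_ext_Qp nrm p ->
  pi ^+ p.-1 + p%:R = 0 ->
  \rank (map_mx (fun z : int => z%:~R : rat) A) = n ->
  (forall G, in_L_dagger nrm A G ->
     exists F, in_Kxy_dagger nrm F /\ phi_maps_to nrm A F G) /\
  (forall G, in_L_dagger nrm A G ->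
     exists P, in_D_dagger nrm P /\ varphi_maps_to nrm A P G).
Proof.
move=> _ [[h0 h1 _ _] _ _ _ _] _ _.
have n0 : nrm 0 = 0 by apply/h1.
have [c Hc] := geo R A.
have sel_ex : forall w, exists v : mono N, in_CA A w ->
    expo A v = w /\ (mdeg v)%:R <= c%:R + 1 + dA R A w :> R.
  move=> w; case: (pselect (in_CA A w)) => [/Hc [v Hv]|nw]; first by exists v.
  by exists [ffun=> 0%N].
pose sel w := projT1 (cid (sel_ex w)).
have selP w : in_CA A w -> expo A (sel w) = w /\
    (mdeg (sel w))%:R <= c%:R + 1 + dA R A w :> R := projT2 (cid (sel_ex w)).
have main : forall G, in_L_dagger nrm A G ->
    exists F, in_Kxy_dagger nrm F /\ phi_maps_to nrm A F G.
  move=> G [r [s [C [r1 [s1 HG]]]]].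
  have s0 : 0 < s by apply: lt_trans ltr01 s1.
  pose F u v := if v == sel (expo A v) then G u (expo A v) else 0.
  exists F; split.
    exists r, s, (s ^+ c.+1 * C); do 2 split => //.
    have C0 : 0 <= C.
      apply: le_trans (HG [ffun=>0%N] (expo A [ffun=>0%N]) _); last first.
        by exists [ffun=>0%N].
      by rewrite !mulr_ge0 ?h0 ?exprn_ge0 ?powR_ge0 // ltW // (lt_trans ltr01).
    move=> u v; rewrite /F; case: eqP => [Hv|_]; last first.
      by rewrite n0 !mul0r mulr_ge0 // exprn_ge0 // ltW.
    have inw : in_CA A (expo A v) by exists v.
    have [_ Hd] := selP _ inw; rewrite -Hv in Hd.
    have Hs : s ^+ mdeg v <= s ^+ c.+1 * s `^ dA R A (expo A v).
      have -> : s ^+ c.+1 * s `^ dA R A (expo A v) = s `^ (c.+1%:R + dA R A (expo A v)).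
        by rewrite powRD ?(gt_eqF s0) ?implybT // (powR_mulrn _ (ltW s0)).
      rewrite -(powR_mulrn _ (ltW s0)); apply: ler_powR; first exact: ltW.
      by rewrite -natr1.
    have G0 : 0 <= nrm (G u (expo A v)) * r ^+ mdeg u.
      by rewrite mulr_ge0 ?h0 // exprn_ge0 // ltW // (lt_trans ltr01).
    apply: le_trans (_ : _ <= nrm (G u (expo A v)) * r ^+ mdeg u *
       (s ^+ c.+1 * s `^ dA R A (expo A v))) _.
      exact: ler_wpM2l.
    rewrite mulrCA; apply: ler_wpM2l; first by rewrite exprn_ge0 // ltW.
    exact: HG.
  move=> u w inw e e0.
  have [Hsw _] := selP w inw.
  exists [:: sel w]; split; first by move=> i; rewrite inE => /eqP ->.
  move=> T uT PT sT.
  have inT : sel w \in T by apply: sT; rewrite inE.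
  rewrite (bigD1_seq (sel w)) //= big_seq_cond big1 ?addr0.
    by rewrite /F Hsw eqxx subrr n0.
  move=> i /andP [iT ni]; rewrite /F (PT i iT).
  by rewrite (negbTE ni).
split; first exact: main.
move=> G HG; exact: (main G HG).
Qed.
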